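(* Let $n\ge2$ and $D=\mathrm{pdiag}(d_1,\dots,d_n)$ with $d_1\le\dots\le d_n$. If $n=2$ and $d_2<0$, then $\mathrm{attr}(D)=\{x\in\overline{\mathbb{R}}^2: x_1=x_2\}$, so $D$ is not strongly stable. In all other cases $D$ is strongly stable.
   Context: Max-plus conventions: $\overline{\mathbb{R}}=\mathbb{R}\cup\{-\infty\}$, $\varepsilon=-\infty$, $\oplus=\max$, $\otimes=+$; $(A\otimes x)_i=\max_j(A_{ij}+x_j)$, $(\lambda\otimes x)_i=\lambda+x_i$, $A^k$ is the $k$-fold max-plus power and $A^0\otimes x=x$. $\mathrm{pdiag}(d_1,\dots,d_n)$ is the matrix with real diagonal entries $d_i$ and all off-diagonal entries equal to the real number $0$. For finite $A\in\mathbb{R}^{n\times n}$, $\lambda(A)$ is the maximum cycle mean, $\lambda(A)=\max\{(a_{i_1i_2}+\dots+a_{i_ki_1})/k\}$ over $k\ge1$ and distinct $i_1,\dots,i_k\in[n]$; it is the unique max-plus eigenvalue of $A$. The eigenspace is $V(A)=\{x\in\overline{\mathbb{R}}^n: A\otimes x=\lambda(A)\otimes x\}$ (including the all-$\varepsilon$ vector). $\mathrm{attr}(A)=\{x\in\overline{\mathbb{R}}^n: A^k\otimes x\in V(A)\text{ for some } k\ge0\}$; $A$ is strongly stable if $\mathrm{attr}(A)=\overline{\mathbb{R}}^n$. *)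

(* Defs.v *)
(* R : realType. Max-plus semiring R ∪ {-oo} modelled as option R,
   with None = epsilon = -oo. *)
From HB Require Import structures.
From mathcomp Require Import all_boot all_order all_algebra.
From mathcomp Require Import reals.
Set Implicit Arguments. Unset Strict Implicit. Unset Printing Implicit Defensive.
Import Order.TTheory GRing.Theory Num.Theory.
Local Open Scope ring_scope.

Section MaxPlus.
Variable R : realType.

Definition mpadd (a b : option R) : option R :=
  match a, b with
  | None, _ => b
  | _, None => a
  | Some x, Some y => Some (Num.max x y)
  end.

Definition mpmul (a b : option R) : option R :=
  match a, b with
  | Some x, Some y => Some (x + y)
  | _, _ => None
  end.

Definition mpmx (n : nat) := 'I_n -> 'I_n -> option R.
Definition mpvec (n : nat) := 'I_n -> option R.

Definition mpmxmul n (A B : mpmx n) : mpmx n :=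
  fun i j => \big[mpadd/None]_(l < n) mpmul (A i l) (B l j).

Definition mpone n : mpmx n := fun i j => if i == j then Some 0 else None.

Definition mppow n (A : mpmx n) (k : nat) : mpmx n := iter k (mpmxmul A) (@mpone n).

Definition mpapply n (A : mpmx n) (x : mpvec n) : mpvec n :=
  fun i => \big[mpadd/None]_(j < n) mpmul (A i j) (x j).

Definition mpscale n (l : R) (x : mpvec n) : mpvec n := fun i => mpmul (Some l) (x i).

Definition mpembed n (A : 'M[R]_n) : mpmx n := fun i j => Some (A i j).

(* mean of the cycle (i_1 ... i_k i_1) given as the sequence s = [:: i_1; ...; i_k] *)
Definition cycle_mean n (A : 'M[R]_n) (s : seq 'I_n) : R :=
  (\sum_(p <- zip s (rot 1 s)) A p.1 p.2) / (size s)%:R.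

Definition elem_cycles n : seq (seq 'I_n) :=
  [seq s <- flatten [seq [seq tval t | t <- enum {: k.-tuple 'I_n}] | k <- iota 1 n]
     | uniq s].

(* maximum cycle mean lambda(A): the maximum of cycle_mean over elem_cycles
   (the list is nonempty when n >= 1). *)
Definition mcm n (A : 'M[R]_n) : R :=
  let l := [seq cycle_mean A s | s <- elem_cycles n] in
  foldr Num.max (head 0 l) l.

(* eigenspace V(A) = {x | A ⊗ x = lambda(A) ⊗ x} (contains the all-epsilon vector) *)
Definition in_eigenspace n (A : 'M[R]_n) (x : mpvec n) : Prop :=
  forall i, mpapply (mpembed A) x i = mpscale (mcm A) x i.

Definition in_attr n (A : 'M[R]_n) (x : mpvec n) : Prop :=
  exists k : nat, in_eigenspace A (mpapply (mppow (mpembed A) k) x).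

Definition strongly_stable n (A : 'M[R]_n) : Prop := forall x : mpvec n, in_attr A x.

(* pdiag(d_1,...,d_n), with d indexed from 1: entry (i,i) (0-based i) is d (i+1);
   off-diagonal entries are the real number 0 *)
Definition pdiag n (d : nat -> R) : 'M[R]_n :=
  \matrix_(i < n, j < n) (if i == j then d i.+1 else 0).

End MaxPlus.

(* Main.v *)
Require Import Defs.
From HB Require Import structures.
From mathcomp Require Import all_boot all_order all_algebra.
From mathcomp Require Import reals.
From mathcomp Require Import lra zify.
From Stdlib Require Import FunctionalExtensionality.
Import Order.TTheory GRing.Theory Num.Theory.
Local Open Scope ring_scope.
Set Implicit Arguments. Unset Strict Implicit. Unset Printing Implicit Defensive.

Section MPT.
Variable R : realType.
Local Notation mpadd := (@Defs.mpadd R).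
Local Notation mpmul := (@Defs.mpmul R).

Lemma mpaddA : associative mpadd.
Proof. by case=> [a|] [b|] [c|] //=; rewrite maxA. Qed.
Lemma mpaddC : commutative mpadd.
Proof. by case=> [a|] [b|] //=; rewrite maxC. Qed.
Lemma mpadd0l : left_id None mpadd.
Proof. by case. Qed.

HB.instance Definition _ := Monoid.isComLaw.Build (option R) None mpadd mpaddA mpaddC mpadd0l.

Lemma mpmulA : associative mpmul.
Proof. by case=> [a|] [b|] [c|] //=; rewrite addrA. Qed.
Lemma mpmul_addr a b c : mpmul a (mpadd b c) = mpadd (mpmul a b) (mpmul a c).
Proof. by case: a b c => [a|] [b|] [c|] //=; rewrite addr_maxr. Qed.
Lemma mpmul_addl a b c : mpmul (mpadd b c) a = mpadd (mpmul b a) (mpmul c a).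
Proof. by case: a b c => [a|] [b|] [c|] //=; rewrite addr_maxl. Qed.
Lemma mpmul0l a : mpmul (Some 0) a = a.
Proof. by case: a => //= a; rewrite add0r. Qed.

Lemma mpmul_bigr (I : finType) a (F : I -> option R) :
  mpmul a (\big[mpadd/None]_i F i) = \big[mpadd/None]_i mpmul a (F i).
Proof.
apply: (big_morph (mpmul a)); first by move=> x y; rewrite mpmul_addr.
by case: a.
Qed.
Lemma mpmul_bigl (I : finType) a (F : I -> option R) :
  mpmul (\big[mpadd/None]_i F i) a = \big[mpadd/None]_i mpmul (F i) a.
Proof.
apply: (big_morph (fun x => mpmul x a)); first by move=> x y; rewrite mpmul_addl.
by case: a.
Qed.

Lemma mpapply_mul n (A B : mpmx R n) x :
  mpapply (mpmxmul A B) x = mpapply A (mpapply B x).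
Proof.
apply: functional_extensionality => i; rewrite /mpapply /mpmxmul.
under eq_bigr => j _ do rewrite mpmul_bigl.
under [RHS]eq_bigr => l _ do rewrite mpmul_bigr.
rewrite exchange_big /=; apply: eq_bigr => l _; apply: eq_bigr => j _.
by rewrite mpmulA.
Qed.

Lemma mpapply_pow n (A : mpmx R n) k x :
  mpapply (mppow A k.+1) x = mpapply A (mpapply (mppow A k) x).
Proof. by rewrite -mpapply_mul. Qed.

Lemma mpapply_scale n (A A' : mpmx R n) c x :
  (forall i j, A' i j = mpmul (Some c) (A i j)) ->
  mpapply A' x = mpscale c (mpapply A x).
Proof.
move=> H; apply: functional_extensionality => i; rewrite /mpscale /mpapply mpmul_bigr.
by apply: eq_bigr => j _; rewrite H mpmulA.
Qed.

Lemma mpapply_one n x : mpapply (@mpone R n) x = x.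
Proof.
apply: functional_extensionality => i; rewrite /mpapply (bigD1 i) //= big1.
  by rewrite /mpone eqxx mpmul0l; case: (x i).
by move=> j /negbTE; rewrite /mpone eq_sym => ->.
Qed.

Lemma mppow1 n (A : mpmx R n) i j : mppow A 1 i j = A i j.
Proof.
rewrite /mppow /= /mpmxmul (bigD1 j) //= big1.
  by rewrite /mpone eqxx; case: (A i j) => //= a; rewrite addr0.
by move=> l /negbTE; rewrite /mpone => ->; case: (A i l).
Qed.

Definition ole (a b : option R) : Prop :=
  match a, b with None, _ => True | Some x, Some y => x <= y | Some _, None => False end.

Lemma ole_trans a b c : ole a b -> ole b c -> ole a c.
Proof. case: a b c => [a|] [b|] [c|] //=; exact: le_trans. Qed.
Lemma ole_antisym a b : ole a b -> ole b a -> a = b.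
Proof. by case: a b => [a|] [b|] //= h1 h2; congr Some; apply/eqP; rewrite eq_le h1 h2. Qed.
Lemma ole_add a b c : ole a c -> ole b c -> ole (mpadd a b) c.
Proof. case: a b c => [a|] [b|] [c|] //= h1 h2; by rewrite ge_max h1 h2. Qed.
Lemma ole_addl a b : ole a (mpadd a b).
Proof. by case: a b => [a|] [b|] //=; rewrite le_max lexx. Qed.

Lemma big_ub (I : finType) (F : I -> option R) c :
  (forall l, ole (F l) c) -> ole (\big[mpadd/None]_l F l) c.
Proof. by move=> H; apply: (big_ind (fun x => ole x c)) => // x y; apply: ole_add. Qed.
Lemma big_lb (I : finType) (F : I -> option R) a l0 :
  ole a (F l0) -> ole a (\big[mpadd/None]_l F l).
Proof. by move=> H; rewrite (bigD1 l0) //=; apply: ole_trans H (ole_addl _ _). Qed.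

Lemma ole_mul_ub a b x y : ole a (Some x) -> ole b (Some y) -> ole (mpmul a b) (Some (x + y)).
Proof. case: a b => [a|] [b|] //= h1 h2; exact: lerD. Qed.
Lemma ole_mul_lb a b x y : ole (Some x) a -> ole (Some y) b -> ole (Some (x + y)) (mpmul a b).
Proof. case: a b => [a|] [b|] //= h1 h2; exact: lerD. Qed.

End MPT.

Section MCM.
Variable R : realType.

Lemma foldr_max_ub (l : seq R) h v : h <= v -> (forall y, y \in l -> y <= v) ->
  foldr Num.max h l <= v.
Proof.
elim: l => //= y l IH hv hl; rewrite ge_max hl ?mem_head //= IH // => z hz.
by apply: hl; rewrite in_cons hz orbT.
Qed.
Lemma foldr_max_lb (l : seq R) h v : v \in l -> v <= foldr Num.max h l.
Proof.
elim: l => //= y l IH; rewrite in_cons => /orP [/eqP ->|hv]; rewrite le_max ?lexx //.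
by rewrite IH ?orbT.
Qed.
Lemma foldr_max_eq (l : seq R) v : v \in l -> (forall y, y \in l -> y <= v) ->
  foldr Num.max (head 0 l) l = v.
Proof.
move=> hv hl; apply/eqP; rewrite eq_le foldr_max_lb // andbT foldr_max_ub //.
by case: l hv hl => //= y l _ hl; rewrite hl ?mem_head.
Qed.

Lemma elem_cycles_size n (s : seq 'I_n) : s \in elem_cycles n -> (0 < size s)%N.
Proof.
rewrite /elem_cycles mem_filter => /andP [_ /flatten_mapP [k]].
rewrite mem_iota => /andP [hk _] /mapP [t _ ->]; by rewrite size_tuple.
Qed.

Lemma elem_cycles_mem n (s : seq 'I_n) : uniq s -> (0 < size s)%N -> (size s <= n)%N ->
  s \in elem_cycles n.
Proof.
move=> hu h1 h2; rewrite /elem_cycles mem_filter hu /=; apply/flatten_mapP.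
exists (size s); first by rewrite mem_iota h1 /= add1n ltnS.
by apply/mapP; exists (in_tuple s) => //; rewrite mem_enum.
Qed.

Lemma cycle_mean_ub n (A : 'M[R]_n) s v : (0 < size s)%N -> (forall i j, A i j <= v) ->
  cycle_mean A s <= v.
Proof.
move=> hs hA; rewrite /cycle_mean ler_pdivrMr ?ltr0n //.
apply: (@le_trans _ _ (\sum_(p <- zip s (rot 1 s)) v)); first by apply: ler_sum => p _.
rewrite big_const_seq count_predT size_zip size_rot minnn.
elim: (size s) => [|k IH] /=; first by rewrite mulr0.
by rewrite -natr1 mulrDr mulr1 addrC lerD2r.
Qed.

Lemma mcm_pdiag n (d : nat -> R) : (2 <= n)%N -> (forall i : 'I_n, d i.+1 <= d n) ->
  mcm (pdiag n d) = Num.max (d n) 0.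
Proof.
move=> hn hd; rewrite /mcm; apply: foldr_max_eq.
- case: (leP 0 (d n)) => h.
  + have hn1 : (n.-1 < n)%N by rewrite prednK // ltnW.
    pose t := Ordinal hn1.
    apply/mapP; exists [:: t]; first by apply: elem_cycles_mem => //=; apply: ltnW.
    rewrite /cycle_mean /= big_cons big_nil /pdiag mxE eqxx /= prednK ?(ltnW hn) //.
    by rewrite addr0 divr1.
  + have h0 : (0 < n)%N by rewrite ltnW.
    have h1 : (1 < n)%N by [].
    pose t0 := Ordinal h0; pose t1 := Ordinal h1.
    apply/mapP; exists [:: t0; t1]; first by apply: elem_cycles_mem.
    rewrite /cycle_mean /= !big_cons big_nil /pdiag !mxE /=.
    by rewrite !addr0 mul0r.
- move=> y /mapP [s hs ->]; apply: cycle_mean_ub; first exact: elem_cycles_size.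
  move=> i j; rewrite /pdiag mxE; case: (i == j); rewrite le_max ?lexx ?orbT //.
  by rewrite hd.
Qed.

End MCM.

Section Cases.
Variable R : realType.

Lemma mppowS n (A : mpmx R n) k i j :
  mppow A k.+1 i j = \big[@mpadd R/None]_l mpmul (A i l) (mppow A k l j).
Proof. by []. Qed.

Lemma Dentry n (d : nat -> R) i j :
  mpembed (pdiag n d) i j = Some (if i == j then d i.+1 else 0).
Proof. by rewrite /mpembed /pdiag mxE. Qed.

Lemma stable_of n (A : 'M[R]_n) K :
  (forall i j, mppow (mpembed A) K.+1 i j = mpmul (Some (mcm A)) (mppow (mpembed A) K i j)) ->
  strongly_stable A.
Proof.
move=> H x; exists K => i.
by rewrite -mpapply_pow (mpapply_scale _ H).
Qed.

Lemma exists_third n (i j : 'I_n) : (3 <= n)%N -> exists l : 'I_n, (l != i) && (l != j).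
Proof.
move=> hn.
have h0 : (0 < n)%N by rewrite (leq_trans _ hn).
have h1 : (1 < n)%N by rewrite (leq_trans _ hn).
have h2 : (2 < n)%N by [].
have [e0|e0] := boolP ((Ordinal h0 != i) && (Ordinal h0 != j)); first by exists (Ordinal h0).
have [e1|e1] := boolP ((Ordinal h1 != i) && (Ordinal h1 != j)); first by exists (Ordinal h1).
exists (Ordinal h2); move: e0 e1; rewrite -!val_eqE /= !negb_and !negbK.
case: i j => [i hi] [j hj] /=.
move=> /orP [] /eqP e0 /orP [] /eqP e1; apply/andP; split; apply/eqP; lia.
Qed.

Section CaseA.
Variables (n : nat) (d : nat -> R).
Hypothesis hn : (3 <= n)%N.
Hypothesis hs : forall i : 'I_n, d i.+1 <= d n.
Hypothesis hdn : d n <= 0.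
Let hd (i : 'I_n) : d i.+1 <= 0 := le_trans (hs i) hdn.
Local Notation D := (mpembed (pdiag n d)).

Lemma pa_ub k i j : ole (mppow D k i j) (Some 0).
Proof.
elim: k i j => [|k IH] i j.
  by rewrite /mppow /= /mpone; case: (i == j) => /=.
rewrite mppowS; apply: big_ub => l; rewrite -(addr0 0); apply: ole_mul_ub => //.
by rewrite Dentry /=; case: (i == l).
Qed.

Lemma pa_lb k i j : ole (Some 0) (mppow D k.+2 i j).
Proof.
elim: k i j => [|k IH] i j; have [l /andP [hli hlj]] := exists_third i j hn.
  rewrite mppowS; apply: (big_lb (l0 := l)); rewrite -(addr0 0).
  apply: ole_mul_lb; first by rewrite Dentry eq_sym (negbTE hli) /=.
  by rewrite mppow1 Dentry (negbTE hlj) /=.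
rewrite mppowS; apply: (big_lb (l0 := l)); rewrite -(addr0 0).
apply: ole_mul_lb; first by rewrite Dentry eq_sym (negbTE hli) /=.
exact: IH.
Qed.

Lemma pa_eq k i j : mppow D k.+2 i j = Some 0.
Proof. by apply: ole_antisym; [apply: pa_ub | apply: pa_lb]. Qed.

Lemma caseA : strongly_stable (pdiag n d).
Proof.
apply: (@stable_of _ _ 2) => i j.
rewrite (pa_eq 1) (pa_eq 0) mcm_pdiag ?(leq_trans _ hn) //.
  by rewrite /= addr0 (max_idPr hdn).
Qed.
End CaseA.
End Cases.

Ltac bsolve := match goal with
 | |- is_true (_ && _) => apply/andP; split; bsolve
 | |- is_true (_ || _) => apply/orP; first [left; bsolve | right; bsolve]
 | _ => lra end.

Section CaseB.
Variable R : realType.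
Variables (n : nat) (d : nat -> R).
Hypothesis hn : (2 <= n)%N.
Hypothesis hs : forall i : 'I_n, d i.+1 <= d n.
Hypothesis hdn : 0 <= d n.
Local Notation D := (mpembed (pdiag n d)).
Local Notation del := (d n).

Lemma ole_SomeP (x y : R) : x <= y -> ole (Some x) (Some y).
Proof. by []. Qed.

Definition inT (i : 'I_n) := del <= d i.+1.
Lemma hT i : inT i -> d i.+1 = del.
Proof. by move=> h; apply/eqP; rewrite eq_le hs. Qed.

Lemma foldr_max_lt (l : seq R) h v : h < v -> (forall y, y \in l -> y < v) ->
  foldr Num.max h l < v.
Proof.
elim: l => //= y l IH hv hl; rewrite gt_max hl ?mem_head //= IH // => z hz.
by apply: hl; rewrite in_cons hz orbT.
Qed.

Definition mm := foldr Num.max (del - 1) [seq (if inT i then del - 1 else d i.+1) | i <- enum 'I_n].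
Lemma hm : mm < del.
Proof.
apply: foldr_max_lt; first lra.
move=> y /mapP [i _ ->]; case: ifP => h; first lra.
by rewrite ltNge; apply/negP; rewrite -/(inT i) h.
Qed.
Lemma hmi i : ~~ inT i -> d i.+1 <= mm.
Proof.
move=> /negbTE h; apply: foldr_max_lb; apply/mapP; exists i; first by rewrite mem_enum.
by rewrite h.
Qed.

Definition ee (i j : 'I_n) : R := if (i == j) && inT i then 0 else if inT i || inT j then 1 else 2.
Definition hh (k : nat) : R := if 0 <= mm then k%:R * mm else 0.
Definition BB k i j : R := if inT i || inT j then (k%:R - ee i j) * del
  else Num.max ((k%:R - 2) * del) (hh k).

Lemma tmax : (n.-1 < n)%N. Proof. by rewrite prednK // ltnW. Qed.
Definition tt := Ordinal tmax.
Lemma inTt : inT tt.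
Proof. by rewrite /inT /= prednK ?(ltnW hn). Qed.

Lemma UB k i j : ole (mppow D k i j) (Some (BB k i j)).
Proof.
have hm' := hm.
have hdn' := hdn.
elim: k i j => [|k IH] i j.
  rewrite /mppow /= /mpone; case: eqP => [<-|] //=.
  rewrite /BB /ee /hh eqxx orbb /=; case: (inT i) => /=; first by rewrite subrr mul0r.
  by rewrite le_max; case: ifP => _; rewrite ?mul0r lexx orbT.
rewrite mppowS; apply: big_ub => l; apply: ole_trans (ole_mul_ub (x := if i == l then d i.+1 else 0) _ (IH l j)) _.
  by rewrite /ole /mpembed /pdiag mxE.
rewrite /BB /ee /hh -!natr1.
set K := k%:R.
have hK : 0 <= K by rewrite ler0n.
have hKd : 0 <= K * del by rewrite mulr_ge0.
have hKm : K * mm <= K * del by rewrite ler_wpM2l // ltW.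
clearbody K.
have hi0 : forall x, inT x -> d x.+1 = del by apply: hT.
have hi1 : forall x, ~~ inT x -> d x.+1 <= mm by apply: hmi.
case: (eqVneq i l) => [<-|hil]; case: (eqVneq i j) => [<-|hij];
 rewrite ?eqxx ?orbb ?(negbTE hil) ?(negbTE hij).
- case hi: (inT i) => /=.
  + apply: ole_SomeP; rewrite (hi0 _ hi); lra.
  + apply: ole_SomeP; have := hi1 _ (negbT hi).
    case: ifP => hm0; rewrite ?addr_maxr ?ge_max ?le_max ?mulrDl ?mulrBl ?mul1r => ?.
    * have : 0 <= K * mm by rewrite mulr_ge0.
      move=> ?; bsolve.
    * bsolve.
- case hi: (inT i); case hj: (inT j) => /=.
  + apply: ole_SomeP; rewrite (hi0 _ hi); lra.
  + apply: ole_SomeP; rewrite (hi0 _ hi); lra.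
  + apply: ole_SomeP; have := hi1 _ (negbT hi); lra.
  + apply: ole_SomeP; have := hi1 _ (negbT hi).
    case: ifP => hm0; rewrite ?addr_maxr ?ge_max ?le_max ?mulrDl ?mulrBl ?mul1r => ?.
    * have : 0 <= K * mm by rewrite mulr_ge0.
      move=> ?; bsolve.
    * bsolve.
- have hli' : (l == i) = false by rewrite eq_sym (negbTE hil).
  rewrite hli' add0r; have hmK : 0 <= mm -> 0 <= K * mm by move=> ?; rewrite mulr_ge0.
  case: (inT i); case: (inT l) => /=;
  apply: ole_SomeP; try (case: ifP => hm0); rewrite ?addr_maxr ?ge_max ?le_max ?mulrDl ?mulrBl ?mul1r ?mul0r ?add0r ?addr0;
  try have := hmK hm0; try move=> ?; bsolve.
- have hli' : (l == i) = false by rewrite eq_sym (negbTE hil).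
  rewrite add0r; have hmK : 0 <= mm -> 0 <= K * mm by move=> ?; rewrite mulr_ge0.
  case: (eqVneq l j) => [<-|hlj]; rewrite ?eqxx ?(negbTE hlj);
  case: (inT i); case: (inT l) => /=; try case: (inT j) => /=;
  apply: ole_SomeP; try (case: ifP => hm0); rewrite ?addr_maxr ?ge_max ?le_max ?mulrDl ?mulrBl ?mul1r ?mul0r ?add0r ?addr0;
  try have := hmK hm0; try move=> ?; bsolve.
Qed.

Lemma LB_step k : (forall l j, inT l -> ole (Some ((k%:R - ee l j) * del)) (mppow D k l j)) ->
  forall i j, ole (Some ((k.+1%:R - ee i j) * del)) (mppow D k.+1 i j).
Proof.
move=> H i j; rewrite mppowS.
have hdn' := hdn.
case hi: (inT i).
- apply: (big_lb (l0 := i)); apply: ole_trans (ole_mul_lb (x := del) _ (H i j hi)).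
    apply: ole_SomeP; rewrite -natr1 /ee hi; case: (i == j) => /=; rewrite ?mulrDl ?mulrBl ?mul1r; lra.
  by rewrite /mpembed /pdiag mxE eqxx (hT hi); apply: ole_SomeP.
case hj: (inT j).
- have hij : (i == j) = false by apply/eqP => e; rewrite e hj in hi.
  apply: (big_lb (l0 := j)); apply: ole_trans (ole_mul_lb (x := 0) _ (H j j hj)).
    apply: ole_SomeP; rewrite -natr1 /ee hi hj hij eqxx /=; rewrite ?mulrDl ?mulrBl ?mul1r; lra.
  by rewrite /mpembed /pdiag mxE hij; apply: ole_SomeP.
- have hit : (i == tt) = false by apply/eqP => e; move: hi; rewrite e inTt.
  have htj : (tt == j) = false by apply/eqP => e; move: hj; rewrite -e inTt.
  apply: (big_lb (l0 := tt)); apply: ole_trans (ole_mul_lb (x := 0) _ (H tt j inTt)).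
    apply: ole_SomeP; rewrite -natr1 /ee hi hj htj inTt /=; rewrite ?mulrDl ?mulrBl ?mul1r; rewrite ?andbF /=; lra.
  by rewrite /mpembed /pdiag mxE hit; apply: ole_SomeP.
Qed.

Lemma LBk k l j : inT l -> ole (Some ((k.+1%:R - ee l j) * del)) (mppow D k.+1 l j).
Proof.
have hdn' := hdn.
elim: k l j => [|k IH] l j hl; last by apply: LB_step => l' j' hl'; apply: IH.
rewrite mppow1 /mpembed /pdiag mxE /ee hl; case: eqP => [<-|] /=; rewrite ?eqxx /=.
  by rewrite (hT hl); apply: ole_SomeP; rewrite subr0 mul1r.
by move=> _; rewrite subrr mul0r.
Qed.

Lemma caseB : strongly_stable (pdiag n d).
Proof.
have hm' := hm. have hdn' := hdn.
have hg : 0 < del - mm by lra.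
have hx : 0 <= 2 * del / (del - mm) by apply: divr_ge0; lra.
have hN := archi_boundP hx.
set N := Num.Def.archi_bound _ in hN.
have Beq : forall k, (N.+2 <= k)%N -> forall i j, BB k i j = (k%:R - ee i j) * del.
  move=> k hk i j; rewrite /BB; case: ifP => // hij.
  have -> : ee i j = 2 by rewrite /ee hij andbC; move: hij; case: (inT i).
  have h2 : (2%:R : R) <= k%:R by rewrite ler_nat; lia.
  apply/max_idPl; rewrite /hh; case: ifP => hm0.
    have hNk : (N%:R : R) <= k%:R by rewrite ler_nat; lia.
    have : 2 * del < k%:R * (del - mm).
      by rewrite -ltr_pdivrMr //; apply: lt_le_trans hN hNk.
    rewrite mulrBr mulrBl; lra.
  by rewrite mulr_ge0 // subr_ge0.
have E : forall k, (N.+2 <= k.+2)%N -> forall i j, mppow D k.+2 i j = Some ((k.+2%:R - ee i j) * del).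
  move=> k hk i j; apply: ole_antisym; last by apply: LB_step => l' j' hl'; apply: LBk.
  by rewrite -Beq //; apply: UB.
apply: (@stable_of _ _ _ N.+2) => i j.
rewrite (E N.+1) // (E N) // (mcm_pdiag hn hs) (max_idPl hdn) /=; congr Some.
rewrite -[(N.+3)%:R]natr1; rewrite ?mulrDl ?mulrBl ?mul1r; lra.
Qed.
End CaseB.

Section N2.
Variable R : realType.
Variable d : nat -> R.
Local Notation D := (mpembed (pdiag 2 d)).

Lemma ord2P (i : 'I_2) : i = ord0 \/ i = ord_max.
Proof. by case: i => [[|[|//]]] Hi; [left|right]; apply: val_inj. Qed.

Lemma app2_0 (x : mpvec R 2) : mpapply D x ord0 = mpadd (mpmul (Some (d 1%N)) (x ord0)) (x ord_max).
Proof.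
rewrite /mpapply big_ord_recl big_ord_recl big_ord0 /mpembed /pdiag !mxE.
have -> : lift ord0 (ord0 : 'I_1) = ord_max :> 'I_2 by apply: val_inj.
have -> : (ord0 == ord_max :> 'I_2) = false by [].
by rewrite eqxx mpmul0l; case: (x ord_max).
Qed.

Lemma app2_1 (x : mpvec R 2) : mpapply D x ord_max = mpadd (x ord0) (mpmul (Some (d 2%N)) (x ord_max)).
Proof.
rewrite /mpapply big_ord_recl big_ord_recl big_ord0 /mpembed /pdiag !mxE.
have -> : lift ord0 (ord0 : 'I_1) = ord_max :> 'I_2 by apply: val_inj.
have -> : (ord_max == ord0 :> 'I_2) = false by [].
by rewrite eqxx mpmul0l; case: (mpmul _ (x ord_max)).
Qed.

Lemma maxF (a b : R) : a <= Num.max a b /\ b <= Num.max a b /\ (Num.max a b = a \/ Num.max a b = b).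
Proof.
rewrite !le_max !lexx orbT /=; split=> //; split=> //.
by case: (leP a b) => _; [right|left].
Qed.

Hypothesis h12 : d 1%N <= d 2%N.
Hypothesis h2 : d 2%N < 0.

Lemma inv2 (a b : option R) : a <> b ->
  mpadd (mpmul (Some (d 1%N)) a) b <> mpadd a (mpmul (Some (d 2%N)) b).
Proof.
have h12' := h12; have h2' := h2.
case: a b => [a|] [b|] //= hab.
- move=> [] e.
  have [p1 [p2 p3]] := maxF (d 1%N + a) b; have [q1 [q2 q3]] := maxF a (d 2%N + b).
  have hne : a != b by apply/eqP => e'; apply: hab; rewrite e'.
  case: (ltgtP a b) hne => // hlt _; case: p3 => e1; case: q3 => e2; lra.
- by move=> [] e; lra.
- by move=> [] e; lra.
Qed.

Lemma eig2 (a b : option R) : mpadd (mpmul (Some (d 1%N)) a) b = a ->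
  mpadd a (mpmul (Some (d 2%N)) b) = b -> a = b.
Proof.
have h12' := h12; have h2' := h2.
case: a b => [a|] [b|] //=.
- move=> [] e1 [] e2.
  have [p1 [p2 p3]] := maxF (d 1%N + a) b; have [q1 [q2 q3]] := maxF a (d 2%N + b).
  congr Some; case: p3 => f1; case: q3 => f2; lra.
Qed.

Lemma mcm2 : mcm (pdiag 2 d) = 0.
Proof.
have h12' := h12; have h2' := h2.
rewrite mcm_pdiag //; first by apply/max_idPr; lra.
by move=> i; case: (ord2P i) => -> //=; lra.
Qed.

Lemma eigen2 (y : mpvec R 2) : in_eigenspace (pdiag 2 d) y <->
  (mpadd (mpmul (Some (d 1%N)) (y ord0)) (y ord_max) = y ord0 /\
   mpadd (y ord0) (mpmul (Some (d 2%N)) (y ord_max)) = y ord_max).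
Proof.
rewrite /in_eigenspace /mpscale mcm2; split.
  by move=> H; rewrite -app2_0 -app2_1 H (H ord_max) !mpmul0l.
move=> [H1 H2] i; rewrite mpmul0l; case: (ord2P i) => ->; by rewrite ?app2_0 ?app2_1.
Qed.

Lemma attr2 (x : mpvec R 2) : in_attr (pdiag 2 d) x <-> x ord0 = x ord_max.
Proof.
split.
- move=> [k Hk]; case: (eqVneq (x ord0) (x ord_max)) => [//|/eqP hne].
  have : forall k, mpapply (mppow D k) x ord0 <> mpapply (mppow D k) x ord_max.
    elim=> [|k' IH]; first by rewrite /mppow /= mpapply_one.
    by rewrite mpapply_pow app2_0 app2_1; apply: inv2.
  move=> /(_ k); move/eigen2: Hk => [e1 e2]; by have := eig2 e1 e2.
- move=> e; exists 0%N; rewrite /mppow /= mpapply_one; apply/eigen2; rewrite -e.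
  have h12' := h12; have h2' := h2.
  by case: (x ord0) => //= a; split; congr Some; apply/max_idPl || apply/max_idPr; lra.
Qed.

Lemma notstable2 : ~ strongly_stable (pdiag 2 d).
Proof.
move=> H; have := H (fun i => if i == ord0 then Some 0 else None).
by move/attr2.
Qed.
End N2.

Theorem corollary4p9 (R : realType) :
  (* case n = 2 and d_2 < 0 *)
  (forall d : nat -> R, d 1%N <= d 2%N -> d 2%N < 0 ->
     (forall x : mpvec R 2, in_attr (pdiag 2 d) x <-> x ord0 = x ord_max) /\
     ~ strongly_stable (pdiag 2 d)) /\
  (* all other cases *)
  (forall (n : nat) (d : nat -> R), (2 <= n)%N ->
     (forall i j : nat, (1 <= i)%N -> (i <= j)%N -> (j <= n)%N -> d i <= d j) ->
     ~ (n = 2%N /\ d 2%N < 0) ->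
     strongly_stable (pdiag n d)).
Proof.
split.
  move=> d h12 h2; split; first by move=> x; apply: attr2.
  exact: notstable2.
move=> n d hn hmono hnot.
have hs : forall i : 'I_n, d i.+1 <= d n.
  by move=> i; apply: hmono => //; apply: ltn_ord.
case: (leP 0 (d n)) => hdn; first exact: caseB hn hs hdn.
have hn3 : (3 <= n)%N.
  case: (eqVneq n 2%N) => [e|ne]; last by rewrite ltn_neqAle eq_sym ne hn.
  by exfalso; apply: hnot; split => //; rewrite -e.
exact: caseA hn3 hs (ltW hdn).
Qed.
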